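(* Let $n\ge2$, let $Q$ be an $n$-pre-admissible quiver, $\mathbf{k}$ a field and $\Lambda=\mathbf{k}Q/\mathcal{J}^2$ ($\mathcal{J}$ the arrow ideal). Then: (a) $\Lambda$ is a string algebra. (b) If $\ell_k\cdots\ell_1$ is a string in $\Lambda$, then $k\le2$; in particular there are no bands in $\Lambda$. (c) $\Lambda$ is representation-finite. (d) If $M$ is an indecomposable $\Lambda$-module which is not simple, then $M$ is projective or injective.
   Context: Quivers are finite and connected; modules are finite-dimensional right modules. $\delta(v)=(\delta^-(v),\delta^+(v))$ counts arrows ending and starting at $v$. $Q$ is $n$-pre-admissible if: (i) every $\delta(v)\in\{(0,0),(0,1),(1,0),(1,1),(1,2),(2,1)\}$, with $(2,2)$ also allowed when $n=2$; (ii) at most one arrow from any vertex to any vertex; (iii) $\delta^+(v)+\delta^-(u)\le 3$ for every arrow $v\to u$. A bound quiver algebra $\mathbf{k}Q/\mathcal{I}$ is a string algebra if: each vertex has at most two incoming and at most two outgoing arrows; for every arrow $\alpha$ there is at most one arrow $\beta$ with $\beta\alpha\notin\mathcal{I}$ and at most one arrow $\gamma$ with $\alpha\gamma\notin\mathcal{I}$; and $\mathcal{I}$ is generated by paths. For each arrow $\alpha$ introduce a formal inverse $\alpha^-$ with $s(\alpha^-)=t(\alpha)$, $t(\alpha^-)=s(\alpha)$. A string of length $k\ge1$ is a sequence $\ell_k\cdots\ell_1$ of arrows and inverse arrows with $t(\ell_i)=s(\ell_{i+1})$, $\ell_i\ne\ell_{i+1}^-$, such that no subword $\ell_{i+r}\cdots\ell_i$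 consisting of direct arrows, nor the inverse $\ell_i^-\cdots\ell_{i+r}^-$ of a subword consisting of inverse arrows, lies in $\mathcal{I}$; there are also trivial strings of length $0$ at each vertex. A band is a string $\bm\ell$ with $s(\ell_1)=t(\ell_k)$ such that every power $\bm\ell^q$ is a string and $\bm\ell$ is not a proper power of another string. *)

(* Defs.v *)
From HB Require Import structures.
From mathcomp Require Import all_boot all_order all_algebra.
Set Implicit Arguments. Unset Strict Implicit. Unset Printing Implicit Defensive.
Import GRing.Theory.
Local Open Scope ring_scope.

Record quiver := Quiver {
  qV : finType;
  qA : finType;
  qs : qA -> qV;
  qt : qA -> qV
}.

Section QuiverDefs.
Variable Q : quiver.

Definition indeg (v : qV Q) : nat := #|[pred a : qA Q | qt a == v]|.
Definition outdeg (v : qV Q) : nat := #|[pred a : qA Q | qs a == v]|.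

Definition adj : rel (qV Q) :=
  fun x y => [exists a : qA Q, ((qs a == x) && (qt a == y))
                              || ((qs a == y) && (qt a == x))].
Definition connected_quiver : Prop := forall u v : qV Q, connect adj u v.

Definition pre_admissible (n : nat) : Prop :=
  [/\ (forall v : qV Q,
          ((indeg v, outdeg v) \in
             [:: (0,0); (0,1); (1,0); (1,1); (1,2); (2,1)]%N)
          \/ (n = 2%N /\ (indeg v, outdeg v) = (2%N, 2%N))),
      (forall a b : qA Q, qs a = qs b -> qt a = qt b -> a = b) &
      (forall a : qA Q, (outdeg (qs a) + indeg (qt a) <= 3)%N)].

(* ---------- Paths and (monomial) ideals ----------
   A path is a sequence of arrows listed in traversal order (first arrow first).
   An ideal generated by paths is modelled by the set I of paths it contains;
   for [a; b] (a then b) this is the element written "b a" in the paper. *)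
Definition is_path (p : seq (qA Q)) : bool :=
  sorted (fun a b => qt a == qs b) p.

(* the set of paths lying in J^2, J the arrow ideal *)
Definition J2 (p : seq (qA Q)) : bool := (2 <= size p)%N.

Definition string_algebra (I : seq (qA Q) -> bool) : Prop :=
  [/\
      (forall p q r, is_path (p ++ q ++ r) -> I q -> I (p ++ q ++ r)),
      (forall v : qV Q, (indeg v <= 2)%N /\ (outdeg v <= 2)%N),
      (forall a : qA Q,
          #|[pred b : qA Q | (qs b == qt a) && ~~ I [:: a; b]]| <= 1)%N &
      (forall a : qA Q,
          #|[pred c : qA Q | (qt c == qs a) && ~~ I [:: c; a]]| <= 1)%N].

(* ---------- Strings and bands ----------
   A letter (a, true) is the arrow a, (a, false) its formal inverse a^-.
   A string l_k ... l_1 is stored as the sequence [:: l_1; ...; l_k]. *)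
Definition letter := (qA Q * bool)%type.
Definition lsrc (x : letter) : qV Q := if x.2 then qs x.1 else qt x.1.
Definition ltgt (x : letter) : qV Q := if x.2 then qt x.1 else qs x.1.

Definition is_string (I : seq (qA Q) -> bool) (w : seq letter) : Prop :=
  [/\ w <> [::],
      sorted (fun x y => ltgt x == lsrc y) w,
      sorted (fun x y => x != (y.1, ~~ y.2)) w &
      forall i r : nat, (i + r < size w)%N ->
        let u := take r.+1 (drop i w) in
        (all (fun x => x.2) u -> ~~ I (map fst u)) /\
        (all (fun x => ~~ x.2) u -> ~~ I (rev (map fst u)))].

Definition is_band (I : seq (qA Q) -> bool) (w : seq letter) : Prop :=
  [/\ is_string I w,
      (exists x w', w = x :: w' /\ lsrc x = ltgt (last x w')),
      (forall q : nat, (0 < q)%N -> is_string I (flatten (nseq q w))) &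
      ~ (exists (u : seq letter) (q : nat),
            [/\ (1 < q)%N, is_string I u & w = flatten (nseq q u)])].

End QuiverDefs.

(* ---------- Finite-dimensional right modules over Lambda = kQ/J^2 ----------
   Lambda is presented by the idempotents e_v and the arrows a, with
   e_v e_w = delta_{vw} e_v, sum_v e_v = 1, a = e_{t a} a e_{s a},
   and a b = 0 for all arrows a, b (all paths of length 2 lie in J^2).
   A right module of dimension d is K^d (row vectors) with the generators
   acting by right multiplication by d x d matrices. *)
Record rmod (Q : quiver) (K : fieldType) := RMod {
  rdim : nat;
  rE : qV Q -> 'M[K]_rdim;
  rX : qA Q -> 'M[K]_rdim;
  rE_mul : forall v w, rE v *m rE w = if v == w then rE v else 0;
  rE_sum : \sum_(v : qV Q) rE v = 1%:M;
  rX_idem : forall a, rX a = rE (qt a) *m rX a *m rE (qs a);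
  rX_J2 : forall a b, rX a *m rX b = 0
}.

Section Modules.
Variables (Q : quiver) (K : fieldType).
Implicit Types M N : rmod Q K.

Definition is_hom M N (f : 'M[K]_(rdim M, rdim N)) : Prop :=
  (forall v, rE M v *m f = f *m rE N v) /\ (forall a, rX M a *m f = f *m rX N a).

Definition iso M N : Prop :=
  exists (f : 'M[K]_(rdim M, rdim N)) (g : 'M[K]_(rdim N, rdim M)),
    [/\ is_hom f, is_hom g, f *m g = 1%:M & g *m f = 1%:M].

(* submodule given by the row space of U *)
Definition stable M (U : 'M[K]_(rdim M)) : Prop :=
  (forall v, (U *m rE M v <= U)%MS) /\ (forall a, (U *m rX M a <= U)%MS).
Arguments stable : clear implicits.

Definition simple_mod M : Prop :=
  (0 < rdim M)%N /\ forall U, stable M U -> U = 0 \/ row_full U.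

Definition indecomposable M : Prop :=
  (0 < rdim M)%N /\
  forall U W : 'M[K]_(rdim M), stable M U -> stable M W ->
    (U :&: W <= (0 : 'M[K]_(rdim M)))%MS -> row_full (U + W)%MS ->
    U = 0 \/ W = 0.

Definition projective_mod M : Prop :=
  forall (B C : rmod Q K) (g : 'M[K]_(rdim B, rdim C)) (f : 'M[K]_(rdim M, rdim C)),
    is_hom g -> row_full g -> is_hom f ->
    exists h : 'M[K]_(rdim M, rdim B), is_hom h /\ h *m g = f.

Definition injective_mod M : Prop :=
  forall (B C : rmod Q K) (i : 'M[K]_(rdim B, rdim C)) (f : 'M[K]_(rdim B, rdim M)),
    is_hom i -> row_free i -> is_hom f ->
    exists h : 'M[K]_(rdim C, rdim M), is_hom h /\ i *m h = f.

Definition rep_finite : Prop :=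
  exists (m : nat) (F : 'I_m -> rmod Q K),
    forall M, indecomposable M -> exists i, iso M (F i).

End Modules.

(* Main.v *)
Require Import Defs.
From mathcomp Require Import all_boot all_order all_algebra.
From mathcomp Require Import zify.
From Stdlib Require Import Classical.
Set Implicit Arguments. Unset Strict Implicit. Unset Printing Implicit Defensive.
Import GRing.Theory.
Local Open Scope ring_scope.

Section Lin.
Variable F : fieldType.

Lemma solve_lin p d (B : 'M[F]_(p,d)) (t : 'cV_p) :
  (forall m : 'rV_p, m *m B = 0 -> m *m t = 0) -> exists l : 'cV_d, B *m l = t.
Proof.
move=> H.
have kt : kermx B *m t = 0.
  apply/row_matrixP => i; rewrite row_mul row0; apply: H.
  by rewrite -row_mul mulmx_ker row0.
have sub1 : (kermx B <= kermx (row_mx B t))%MS.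
  by apply/sub_kermxP; rewrite mul_mx_row mulmx_ker kt row_mx0.
have r1 := mxrankS sub1; rewrite !mxrank_ker in r1.
have hB := rank_leq_row B; have hB' := rank_leq_row (row_mx B t).
have sB : (B^T <= (row_mx B t)^T)%MS by rewrite tr_row_mx -addsmxE addsmxSl.
have req : (\rank (row_mx B t)^T <= \rank B^T)%N.
  rewrite !mxrank_tr. 
  have : (p - \rank B <= p - \rank (row_mx B t))%N := r1.
  by move=> h; apply: contraLR h; rewrite -!ltnNge => h'; rewrite ltn_sub2l //; apply: leq_trans h' hB'.
have := mxrank_leqif_sup sB; move=> [_ e].
have sB2 : ((row_mx B t)^T <= B^T)%MS.
  by rewrite -e eqn_leq req mxrankS.
have : (t^T <= B^T)%MS.
  apply: submx_trans sB2; rewrite tr_row_mx -addsmxE addsmxSr.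
  done.
case/submxP => D hD; exists D^T.
by rewrite -[t]trmxK hD trmx_mul trmxK.
Qed.

Lemma functional_ex p d (S : 'M[F]_(p,d)) (y : 'rV_d) :
  ~~ (y <= S)%MS -> exists l : 'cV_d, S *m l = 0 /\ y *m l = 1%:M.
Proof.
move=> ny.
have [l hl] : exists l : 'cV_d, col_mx S y *m l = col_mx 0 1%:M.
  apply: solve_lin => m; rewrite -[m]hsubmxK mul_row_col mul_row_col mulmx0 add0r => h.
  have h11 := mx11_scalar (rsubmx m).
  case: (eqVneq (rsubmx m 0 0) 0) => [z|nz].
    by rewrite h11 z mul_scalar_mx scale0r.
  exfalso; apply: (negP ny).
  have -> : y = (- (rsubmx m 0 0)^-1) *: (lsubmx m *m S).
    rewrite h11 mul_scalar_mx in h.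
    move/eqP: h; rewrite addrC addr_eq0 => /eqP h.
    by rewrite -[y]scale1r -(mulVf nz) -scalerA h scalerN scaleNr.
  by rewrite scalemxAl submxMl.
exists l; move: hl; rewrite mul_col_mx => /eq_col_mx [h1 h2]; by [].
Qed.

End Lin.


Section Mods.
Variables (Q : quiver) (K : fieldType).
Implicit Types M N P : rmod Q K.

Lemma hom_comp M N P (f : 'M[K]_(rdim M, rdim N)) (g : 'M[K]_(rdim N, rdim P)) :
  is_hom f -> is_hom g -> is_hom (f *m g).
Proof.
move=> [f1 f2] [g1 g2]; split=> [v|a].
  by rewrite mulmxA f1 -mulmxA g1 mulmxA.
by rewrite mulmxA f2 -mulmxA g2 mulmxA.
Qed.

Lemma one_neq0 n : (0 < n)%N -> (1%:M : 'M[K]_n) != 0.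
Proof.
move=> n0; apply/negP => /eqP /matrixP /(_ (Ordinal n0) (Ordinal n0)).
by rewrite !mxE eqxx /= => /eqP; rewrite oner_eq0.
Qed.

Lemma retract_iso M N (r : 'M[K]_(rdim M, rdim N)) (s : 'M[K]_(rdim N, rdim M)) :
  indecomposable M -> (0 < rdim N)%N -> is_hom r -> is_hom s -> s *m r = 1%:M ->
  iso M N.
Proof.
move=> [_ Hind] n0 [r1 r2] [s1 s2] sr.
have rsE v : r *m s *m rE M v = rE M v *m (r *m s).
  by rewrite -mulmxA -s1 mulmxA -r1 -mulmxA.
have rsX a : r *m s *m rX M a = rX M a *m (r *m s).
  by rewrite -mulmxA -s2 mulmxA -r2 -mulmxA.
have idem : r *m s *m (r *m s) = r *m s by rewrite mulmxA -(mulmxA r) sr mulmx1.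
have [U0|W0] : r *m s = 0 \/ 1%:M - r *m s = 0.
  apply: Hind.
  - by split=> [v|a]; [rewrite rsE|rewrite rsX]; apply: submxMl.
  - split=> [v|a].
      by rewrite mulmxBl mul1mx rsE -{1}[rE M v]mulmx1 -mulmxBr submxMl.
    by rewrite mulmxBl mul1mx rsX -{1}[rX M a]mulmx1 -mulmxBr submxMl.
  - set z := (_ :&: _)%MS.
    have /submxP [D1 h1] : (z <= r *m s)%MS by apply: capmxSl.
    have /submxP [D2 h2] : (z <= 1%:M - r *m s)%MS by apply: capmxSr.
    have e1 : z *m (r *m s) = z by rewrite h1 -mulmxA idem.
    have e2 : z *m (r *m s) = 0 by rewrite h2 -mulmxA mulmxBl mul1mx idem subrr mulmx0.
    by rewrite submx0 -e1 e2.
  - rewrite -sub1mx.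
    have h := addmx_sub_adds (submx_refl (r *m s)) (submx_refl (1%:M - r *m s)).
    by rewrite addrC subrK in h.
- exfalso; have s0 : s = 0.
    by rewrite -[s]mul1mx -sr -mulmxA U0 mulmx0.
  by move: sr; rewrite s0 mul0mx => /esym /eqP; apply/negP; apply: one_neq0.
- exists r, s; split=> //.
  by move/eqP: W0; rewrite subr_eq0 => /eqP <-.
Qed.

Lemma iso_dim M N : iso M N -> rdim M = rdim N.
Proof.
move=> [f [g [_ _ fg gf]]].
apply/eqP; rewrite eqn_leq.
have h1 := mxrankM_maxl f g; rewrite fg mxrank1 in h1.
have h2 := mxrankM_maxl g f; rewrite gf mxrank1 in h2.
by rewrite (leq_trans h1 (rank_leq_col f)) (leq_trans h2 (rank_leq_col g)).
Qed.

Lemma dim1_simple M : rdim M = 1%N -> simple_mod M.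
Proof.
move=> d1; split; first by rewrite d1.
move=> U _; case: (eqVneq U 0) => [->|nz]; [by left|right].
rewrite /row_full eqn_leq rank_leq_col /=.
by apply: (@leq_trans 1%N); [rewrite d1 | rewrite lt0n mxrank_eq0].
Qed.

Lemma iso_proj M N : iso M N -> projective_mod N -> projective_mod M.
Proof.
move=> [f [g [hf hg fg gf]]] PN B C h k hh hfull hk.
have [l [hl e]] := PN B C h (g *m k) hh hfull (hom_comp hg hk).
exists (f *m l); split; first by apply: hom_comp.
by rewrite -mulmxA e mulmxA fg mul1mx.
Qed.

Lemma iso_inj M N : iso M N -> injective_mod N -> injective_mod M.
Proof.
move=> [f [g [hf hg fg gf]]] PN B C i k hi hfree hk.
have [l [hl e]] := PN B C i (k *m f) hi hfree (hom_comp hk hf).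
exists (l *m g); split; first by apply: hom_comp.
by rewrite mulmxA e -mulmxA fg mulmx1.
Qed.

End Mods.


Section Basis.
Variables (K : fieldType) (B : finType).
Definition dr (e : B) : 'rV[K]_#|B| := delta_mx 0 (enum_rank e).
Definition dc (e : B) : 'cV[K]_#|B| := delta_mx (enum_rank e) 0.

Lemma rowP' d (X Y : 'M[K]_(#|B|, d)) : (forall e, dr e *m X = dr e *m Y) -> X = Y.
Proof.
move=> H; apply/row_matrixP => i; rewrite !rowE.
by have := H (enum_val i); rewrite /dr enum_valK.
Qed.

Lemma colP' d (X Y : 'M[K]_(d, #|B|)) : (forall e, X *m dc e = Y *m dc e) -> X = Y.
Proof.
move=> H; apply/matrixP => i j.
have := H (enum_val j); rewrite /dc enum_valK -!colE => /matrixP /(_ i 0).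
by rewrite !mxE.
Qed.

Lemma dr_dc e e' : dr e *m dc e' = ((e == e')%:R)%:M.
Proof.
apply/matrixP => i j; rewrite /dr /dc !ord1 !mxE (bigD1 (enum_rank e)) //= big1.
  rewrite !mxE !eqxx /= mul1r addr0 mulr1n (inj_eq enum_rank_inj).
  by case: (e == e').
by move=> k nk; rewrite !mxE (negbTE nk) andbF mul0r.
Qed.

Definition mkrows d (F : B -> 'rV[K]_d) : 'M[K]_(#|B|, d) :=
  \matrix_(i, j) F (enum_val i) 0 j.
Definition mkcols d (G : B -> 'cV[K]_d) : 'M[K]_(d, #|B|) :=
  \matrix_(i, j) G (enum_val j) i 0.

Lemma dr_mkrows d (F : B -> 'rV[K]_d) e : dr e *m mkrows F = F e.
Proof. by rewrite /dr -rowE; apply/rowP => j; rewrite !mxE enum_rankK. Qed.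

Lemma mkcols_dc d (G : B -> 'cV[K]_d) e : mkcols G *m dc e = G e.
Proof. by rewrite /dc -colE; apply/colP => j; rewrite !mxE enum_rankK. Qed.

Lemma mkrows_eta d (X : 'M[K]_(#|B|, d)) : X = mkrows (fun e => dr e *m X).
Proof. by apply: rowP' => e; rewrite dr_mkrows. Qed.

Lemma mkcols_eta d (X : 'M[K]_(d, #|B|)) : X = mkcols (fun e => X *m dc e).
Proof. by apply: colP' => e; rewrite mkcols_dc. Qed.

Lemma mkrows_cols d (F : B -> 'rV[K]_d) G :
  (forall e e', F e *m G e' = ((e == e')%:R)%:M) -> mkrows F *m mkcols G = 1%:M.
Proof.
move=> H; apply: rowP' => e; apply: colP' => e'.
by rewrite mulmxA dr_mkrows -mulmxA mkcols_dc H mulmx1 dr_dc.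
Qed.

End Basis.

Section Model.
Variables (Q : quiver) (K : fieldType) (B : finType) (lab : B -> qV Q)
  (act coact : qA Q -> B -> option B).
Hypothesis Hac : forall a e e', (act a e == Some e') = (coact a e' == Some e).
Hypothesis Hlab : forall a e e', act a e = Some e' -> lab e = qt a /\ lab e' = qs a.
Hypothesis Hnil : forall a b e e', act a e = Some e' -> act b e' = None.

Definition mE (v : qV Q) : 'M[K]_#|B| :=
  \matrix_(i, j) ((i == j) && (lab (enum_val i) == v))%:R.
Definition mX (a : qA Q) : 'M[K]_#|B| :=
  \matrix_(i, j) (act a (enum_val i) == Some (enum_val j))%:R.

Lemma dr_mE e v : dr K e *m mE v = (lab e == v)%:R *: dr K e.
Proof.
rewrite /dr -rowE; apply/rowP => j; rewrite !mxE enum_rankK eqxx /= eq_sym.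
by case: (_ == enum_rank e); rewrite /= ?mulr1 ?mulr0.
Qed.

Lemma dr_mX e a : dr K e *m mX a = if act a e is Some e' then dr K e' else 0.
Proof.
rewrite /dr -rowE; apply/rowP => j; rewrite !mxE enum_rankK.
case: (act a e) => [e'|]; last by rewrite mxE.
rewrite !mxE /=.
have -> : (Some e' == Some (enum_val j)) = (e' == enum_val j) by [].
case: (eqVneq j (enum_rank e')) => [->|nj]; first by rewrite enum_rankK eqxx.
case: (eqVneq e' (enum_val j)) => // hj.
by rewrite hj enum_valK eqxx in nj.
Qed.

Lemma mE_dc e v : mE v *m dc K e = (lab e == v)%:R *: dc K e.
Proof.
rewrite /dc -colE; apply/colP => j; rewrite !mxE eqxx andbT.
by case: (eqVneq j (enum_rank e)) => [->|nj]; rewrite ?enum_rankK /= ?mulr1 ?mulr0.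
Qed.

Lemma mX_dc e a : mX a *m dc K e = if coact a e is Some e' then dc K e' else 0.
Proof.
rewrite /dc -colE; apply/colP => j; rewrite !mxE enum_rankK Hac.
case: (coact a e) => [e'|]; last by rewrite mxE.
rewrite !mxE /= ?eqxx ?andbT.
have -> : (Some e' == Some (enum_val j)) = (e' == enum_val j) by [].
case: (eqVneq j (enum_rank e')) => [->|nj]; first by rewrite enum_rankK eqxx.
case: (eqVneq e' (enum_val j)) => // hj.
by rewrite hj enum_valK eqxx in nj.
Qed.

Lemma mE_mul v w : mE v *m mE w = if v == w then mE v else 0.
Proof.
apply: rowP' => e; rewrite mulmxA dr_mE -scalemxAl dr_mE scalerA.
case: (eqVneq v w) => [<-|nvw]; first by rewrite dr_mE -natrM mulnb andbb.
rewrite mulmx0; case: (eqVneq (lab e) v) => [hv|]; last by rewrite mul0r scale0r.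
by rewrite -hv in nvw; rewrite (negbTE nvw) mulr0 scale0r.
Qed.

Lemma mE_sum : \sum_v mE v = 1%:M.
Proof.
apply: rowP' => e; rewrite mulmx_sumr mulmx1.
rewrite (bigD1 (lab e)) //= big1 ?addr0; first by rewrite dr_mE eqxx scale1r.
by move=> v nv; rewrite dr_mE eq_sym (negbTE nv) scale0r.
Qed.

Lemma mX_idem a : mX a = mE (qt a) *m mX a *m mE (qs a).
Proof.
apply: rowP' => e; rewrite !mulmxA dr_mE -!scalemxAl dr_mX.
case E: (act a e) => [e'|]; last by rewrite mul0mx scaler0.
have [h1 h2] := Hlab E.
by rewrite dr_mE h1 h2 !eqxx !scale1r.
Qed.

Lemma mX_J2 a b : mX a *m mX b = 0.
Proof.
apply: rowP' => e; rewrite mulmxA dr_mX mulmx0.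
case E: (act a e) => [e'|]; last by rewrite mul0mx.
by rewrite dr_mX (Hnil b E).
Qed.

Definition model : rmod Q K := RMod mE_mul mE_sum mX_idem mX_J2.

Lemma hom_from_model (M : rmod Q K) (F : B -> 'rV[K]_(rdim M)) :
  (forall e v, F e *m rE M v = (lab e == v)%:R *: F e) ->
  (forall e a, F e *m rX M a = if act a e is Some e' then F e' else 0) ->
  is_hom (M := model) (N := M) (mkrows F).
Proof.
move=> H1 H2; split=> [v|a]; apply: rowP' => e; rewrite !mulmxA /=.
  by rewrite dr_mE -scalemxAl !dr_mkrows H1.
rewrite dr_mX !dr_mkrows H2.
by case: (act a e) => [e'|]; rewrite ?dr_mkrows ?mul0mx.
Qed.

Lemma hom_to_model (M : rmod Q K) (G : B -> 'cV[K]_(rdim M)) :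
  (forall e v, rE M v *m G e = (lab e == v)%:R *: G e) ->
  (forall e a, rX M a *m G e = if coact a e is Some e' then G e' else 0) ->
  is_hom (M := M) (N := model) (mkcols G).
Proof.
move=> H1 H2; split=> [v|a]; apply: colP' => e; rewrite -!mulmxA /=.
  by rewrite mE_dc -scalemxAr !mkcols_dc H1.
rewrite mX_dc !mkcols_dc H2.
by case: (coact a e) => [e'|]; rewrite ?mkcols_dc ?mulmx0.
Qed.

Lemma hom_from_model_inv (M : rmod Q K) (f : 'M[K]_(#|B|, rdim M)) :
  is_hom (M := model) (N := M) f ->
  (forall e v, dr K e *m f *m rE M v = (lab e == v)%:R *: (dr K e *m f)) /\
  (forall e a, dr K e *m f *m rX M a = if act a e is Some e' then dr K e' *m f else 0).
Proof.
move=> [H1 H2]; split=> [e v|e a]; rewrite -mulmxA.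
  by rewrite -H1 mulmxA /= dr_mE scalemxAl.
by rewrite -H2 mulmxA /= dr_mX; case: (act a e) => [e'|]; rewrite ?mul0mx.
Qed.

Lemma hom_to_model_inv (M : rmod Q K) (f : 'M[K]_(rdim M, #|B|)) :
  is_hom (M := M) (N := model) f ->
  (forall e v, rE M v *m (f *m dc K e) = (lab e == v)%:R *: (f *m dc K e)) /\
  (forall e a, rX M a *m (f *m dc K e) = if coact a e is Some e' then f *m dc K e' else 0).
Proof.
move=> [H1 H2]; split=> [e v|e a]; rewrite mulmxA.
  by rewrite H1 -mulmxA /= mE_dc scalemxAr.
by rewrite H2 -mulmxA /= mX_dc; case: (coact a e) => [e'|]; rewrite ?mulmx0.
Qed.

End Model.


Lemma insub_eqSome (T : eqType) (P : pred T) (a : T) (b : {x : T | P x}) :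
  (insub a == Some b) = (a == val b).
Proof.
case: insubP => [b' Pa <-|nP] /=.
  by apply/eqP/eqP => [[->]|/val_inj ->].
apply/esym/negbTE; apply: contra nP => /eqP ->; exact: (valP b).
Qed.

Section Specific.
Variables (Q : quiver) (K : fieldType).
Implicit Types M N : rmod Q K.

Section S.
Variable v : qV Q.
Definition labS (e : unit) := v.
Definition actS (a : qA Q) (e : unit) : option unit := None.
Lemma HacS a e e' : (actS a e == Some e') = (actS a e' == Some e). Proof. by []. Qed.
Lemma HlabS a e e' : actS a e = Some e' -> labS e = qt a /\ labS e' = qs a. Proof. by []. Qed.
Lemma HnilS a b e e' : actS a e = Some e' -> actS b e' = None. Proof. by []. Qed.
Definition Smod : rmod Q K := model K HlabS HnilS.
End S.

Section P.
Variable u : qV Q.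
Definition BP := option {b : qA Q | qt b == u}.
Definition labP (e : BP) := if e is Some b then qs (val b) else u.
Definition actP (a : qA Q) (e : BP) : option BP :=
  if e is None then omap Some (insub a) else None.
Definition coactP (a : qA Q) (e : BP) : option BP :=
  if e is Some b then (if val b == a then Some None else None) else None.
Lemma HacP a e e' : (actP a e == Some e') = (coactP a e' == Some e).
Proof.
case: e => [b|]; case: e' => [b'|] //=.
- by case: (val b' == a).
- case: insubP => [b0 _ <-|nP] /=.
    case: (eqVneq b0 b') => [->|ne]; first by rewrite !eqxx.
    rewrite -[Some (Some b0) == _]/(b0 == b') (negbTE ne) ifF //.
    by apply/negbTE; apply: contra ne => /eqP h; apply/eqP/val_inj.
  case: (eqVneq (sval b') a) => [h|//]; exfalso; move/negP: nP; apply; rewrite -h; exact: (valP b').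
- by case: insub.
Qed.
Lemma HlabP a e e' : actP a e = Some e' -> labP e = qt a /\ labP e' = qs a.
Proof.
case: e => [//|] /=; case: insubP => [b Pa <-|//] [<-] /=.
by split=> //; apply/esym/eqP; exact: (valP b).
Qed.
Lemma HnilP a b e e' : actP a e = Some e' -> actP b e' = None.
Proof. by case: e => [//|] /=; case: insub => [b'|] // [<-]. Qed.
Definition Pmod : rmod Q K := model K HlabP HnilP.
End P.

Section I.
Variable w : qV Q.
Definition BI := option {c : qA Q | qs c == w}.
Definition labI (e : BI) := if e is Some c then qt (val c) else w.
Definition actI (a : qA Q) (e : BI) : option BI :=
  if e is Some c then (if val c == a then Some None else None) else None.
Definition coactI (a : qA Q) (e : BI) : option BI :=
  if e is None then omap Some (insub a) else None.
Lemma HacI a e e' : (actI a e == Some e') = (coactI a e' == Some e).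
Proof.
case: e => [b|]; case: e' => [b'|] //=.
- by case: (val b == a).
- case: insubP => [b0 _ <-|nP] /=.
    case: (eqVneq b0 b) => [->|ne]; first by rewrite !eqxx.
    rewrite -[Some (Some b0) == _]/(b0 == b) (negbTE ne) ifF //.
    by apply/negbTE; apply: contra ne => /eqP h; apply/eqP/val_inj.
  case: (eqVneq (sval b) a) => [h|//]; exfalso; move/negP: nP; apply; rewrite -h; exact: (valP b).
- by case: insub.
Qed.
Lemma HlabI a e e' : actI a e = Some e' -> labI e = qt a /\ labI e' = qs a.
Proof.
case: e => [c|//] /=; case: eqP => [<-|//] [<-] /=.
by split=> //; apply/esym/eqP; exact: (valP c).
Qed.
Lemma HnilI a b e e' : actI a e = Some e' -> actI b e' = None.
Proof. by case: e => [c|//] /=; case: (val c == a) => // [[<-]]. Qed.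
Definition Imod : rmod Q K := model K HlabI HnilI.
End I.


Lemma Er M (x : 'rV[K]_(rdim M)) u v : x *m rE M u = x -> x *m rE M v = (u == v)%:R *: x.
Proof.
move=> h; rewrite -{1}h -mulmxA rE_mul.
by case: (eqVneq u v) => [_|_] /=; rewrite ?mulr1n ?mulr0n ?h ?scale1r ?mulmx0 ?scale0r.
Qed.

Lemma El M (c : 'cV[K]_(rdim M)) u v : rE M u *m c = c -> rE M v *m c = (u == v)%:R *: c.
Proof.
move=> h; rewrite -{1}h mulmxA rE_mul eq_sym.
by case: (eqVneq u v) => [<-|_] /=; rewrite ?eqxx ?mulr1n ?mulr0n ?h ?scale1r ?mul0mx ?scale0r.
Qed.

Lemma XE M a v : rX M a *m rE M v = (qs a == v)%:R *: rX M a.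
Proof.
rewrite {1}(rX_idem M a) -mulmxA rE_mul.
case: (eqVneq (qs a) v) => [_|_] /=; last by rewrite mulmx0 scale0r.
by rewrite scale1r -rX_idem.
Qed.

Lemma EX M a v : rE M v *m rX M a = (qt a == v)%:R *: rX M a.
Proof.
rewrite {1}(rX_idem M a) !mulmxA rE_mul eq_sym.
case: (eqVneq (qt a) v) => [<-|_] /=; last by rewrite !mul0mx scale0r.
by rewrite scale1r -rX_idem.
Qed.

Lemma XX M a b (x : 'rV[K]_(rdim M)) : x *m rX M a *m rX M b = 0.
Proof. by rewrite -mulmxA rX_J2 mulmx0. Qed.

Lemma recS M v (x : 'rV[K]_(rdim M)) psi : indecomposable M -> x *m rE M v = x ->
  (forall a, rX M a = 0) -> x *m psi = 1%:M -> iso M (Smod v).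
Proof.
move=> Hi h1 hX h3.
apply: (@retract_iso _ _ M (Smod v) (mkcols (B:=unit) (fun _ => rE M v *m psi))
                    (mkrows (B:=unit) (fun _ => x))) => //.
- by rewrite /= card_unit.
- apply: (hom_to_model (@HacS)) => [e w|e a].
    have hc : rE M v *m (rE M v *m psi) = rE M v *m psi by rewrite mulmxA rE_mul eqxx.
    exact: El hc.
  by rewrite hX mul0mx.
- apply: (hom_from_model (@HlabS v)) => [e w|e a].
    exact: Er.
  by rewrite hX mulmx0.
- apply: mkrows_cols => e e'; rewrite mulmxA h1 h3.
  by case: e; case: e'.
Qed.

Lemma sc1 : ((true%:R)%:M : 'M[K]_1) = 1%:M. Proof. by []. Qed.
Lemma sc0 : ((false%:R)%:M : 'M[K]_1) = 0.
Proof. by apply/matrixP => i j; rewrite !mxE mul0rn. Qed.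

Lemma sc0' : ((0 : K)%:M : 'M[K]_1) = 0.
Proof. by apply/matrixP => i j; rewrite !mxE mul0rn. Qed.

Lemma Someb (T : eqType) (b b' : T) : (Some b == Some b') = (b == b').
Proof. by []. Qed.

Lemma recP M u (x : 'rV[K]_(rdim M)) (phi : 'cV[K]_(rdim M)) (lam : qA Q -> 'cV[K]_(rdim M)) :
  indecomposable M ->
  x *m rE M u = x -> x *m phi = 1%:M ->
  (forall b, qt b = u -> x *m rE M (qs b) *m lam b = 0) ->
  (forall c, rX M c *m rE M u *m phi = 0) ->
  (forall b c, qt b = u -> c != b -> rX M c *m rE M (qs b) *m lam b = 0) ->
  (forall b, qt b = u -> rX M b *m lam b = rE M u *m phi) ->
  iso M (Pmod u).
Proof.
move=> Hi P1 P2 P3 P4 P5 P6.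
pose F (e : BP u) := if e is Some b then x *m rX M (val b) else x.
pose G (e : BP u) := if e is Some b then rE M (qs (val b)) *m lam (val b) else rE M u *m phi.
have vb (b : {b : qA Q | qt b == u}) : qt (val b) = u by apply/eqP; exact: (valP b).
apply: (@retract_iso _ _ M (Pmod u) (mkcols G) (mkrows F)) => //.
- by rewrite /= card_option.
- apply: (hom_to_model (@HacP u)) => [[b|] w|[b|] a] /=.
  + have hc : rE M (qs (val b)) *m (rE M (qs (val b)) *m lam (val b)) = rE M (qs (val b)) *m lam (val b).
      by rewrite mulmxA rE_mul eqxx.
    exact: El hc.
  + have hc : rE M u *m (rE M u *m phi) = rE M u *m phi by rewrite mulmxA rE_mul eqxx.
    exact: El hc.
  + case: (eqVneq (val b) a) => [<-|ne].
      by rewrite mulmxA XE eqxx scale1r (P6 _ (vb b)).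
    by rewrite mulmxA P5 //; [exact: vb | rewrite eq_sym].
  + by rewrite mulmxA P4.
- apply: (hom_from_model (@HlabP u)) => [[b|] w|[b|] a] /=.
  + by rewrite -mulmxA XE -scalemxAr.
  + exact: Er.
  + exact: XX.
  + case: insubP => [b Pa <-|nP] //=.
    by rewrite -{1}P1 -mulmxA EX (negbTE nP) scale0r mulmx0.
- apply: mkrows_cols => [[b|] [b'|]] /=.
  + case: (eqVneq b b') => [<-|ne].
      by rewrite eqxx sc1 !mulmxA -(mulmxA x) XE eqxx scale1r -mulmxA (P6 _ (vb b)) mulmxA P1 P2.
    rewrite Someb (negbTE ne) sc0 !mulmxA -(mulmxA x) -mulmxA P5 ?mulmx0 //; first exact: vb.
  + by rewrite -!mulmxA [rX M _ *m _]mulmxA P4 mulmx0 ?sc0 ?sc0'.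
  + by rewrite mulmxA P3 ?vb // ?sc0 ?sc0'.
  + by rewrite ?eqxx ?sc1 mulmxA P1 P2.
Qed.

Lemma recI M w (y : 'rV[K]_(rdim M)) (psi : 'cV[K]_(rdim M)) (xs : qA Q -> 'rV[K]_(rdim M)) :
  indecomposable M ->
  y *m rE M w = y -> (forall d, y *m rX M d = 0) -> y *m psi = 1%:M ->
  (forall c, qs c = w -> xs c *m rE M (qt c) = xs c) ->
  (forall c d, qs c = w -> xs c *m rX M d = (d == c)%:R *: y) ->
  (forall c, qs c = w -> xs c *m rE M w *m psi = 0) ->
  iso M (Imod w).
Proof.
move=> Hi I1 I2 I3 I4 I5 I6.
pose F (e : BI w) := if e is Some c then xs (val c) else y.
pose G (e : BI w) := if e is Some c then rX M (val c) *m psi else rE M w *m psi.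
have vc (c : {c : qA Q | qs c == w}) : qs (val c) = w by apply/eqP; exact: (valP c).
apply: (@retract_iso _ _ M (Imod w) (mkcols G) (mkrows F)) => //.
- by rewrite /= card_option.
- apply: (hom_to_model (@HacI w)) => [[c|] v|[c|] a] /=.
  + by rewrite mulmxA EX -scalemxAl.
  + have hc : rE M w *m (rE M w *m psi) = rE M w *m psi by rewrite mulmxA rE_mul eqxx.
    exact: El hc.
  + by rewrite mulmxA rX_J2 mul0mx.
  + case: insubP => [c Pa <-|nP] /=.
      by rewrite mulmxA XE vc eqxx scale1r.
    by rewrite mulmxA XE (negbTE nP) scale0r mul0mx.
- apply: (hom_from_model (@HlabI w)) => [[c|] v|[c|] a] /=.
  + exact: Er (I4 _ (vc c)).
  + exact: Er.
  + rewrite I5 ?vc // eq_sym; case: (sval c == a) => /=; first by rewrite scale1r.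
    by rewrite scale0r.
  + exact: I2.
- apply: mkrows_cols => [[c|] [c'|]] /=.
  + rewrite mulmxA I5 ?vc //.
    case: (eqVneq c c') => [<-|ne]; first by rewrite !eqxx scale1r I3.
    rewrite (_ : (Some c == Some c') = false); last first.
      by apply/negbTE; apply: contra ne => /eqP [->].
    rewrite (_ : (val c' == val c) = false) ?scale0r ?mul0mx ?sc0 //.
    by apply: contraNF ne => /eqP h; apply/eqP; apply: val_inj; rewrite h.
  + by rewrite mulmxA I6 ?vc // ?sc0 ?sc0'.
  + by rewrite mulmxA I2 mul0mx ?sc0 ?sc0'.
  + by rewrite ?eqxx ?sc1 mulmxA I1 I3.
Qed.

Lemma Pproj u : projective_mod (Pmod u).
Proof.
move=> B C g f hg hfull hf.
have [f1 f2] := hom_from_model_inv hf.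
have [G' hG'] := row_fullP hfull.
pose z := dr K (None : BP u) *m f.
pose b := z *m G' *m rE B u.
have bE : b *m rE B u = b by rewrite /b -mulmxA rE_mul eqxx.
exists (mkrows (fun e : BP u => if e is Some c then b *m rX B (val c) else b)).
split.
- apply: (hom_from_model (@HlabP u)) => [[c|] v|[c|] a] /=.
  + by rewrite -mulmxA XE -scalemxAr.
  + exact: Er.
  + exact: XX.
  + case: insubP => [c Pa <-|nP] //=.
    by rewrite -{1}bE -mulmxA EX (negbTE nP) scale0r mulmx0.
- have bg : b *m g = z.
    rewrite /b -mulmxA hg.1 !mulmxA -(mulmxA z) hG' mulmx1.
    by have := f1 None u; rewrite eqxx scale1r.
  apply: rowP' => e; rewrite mulmxA dr_mkrows; case: e => [c|] /=; last exact: bg.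
  rewrite -mulmxA hg.2 mulmxA bg /z.
  by have := f2 None (val c); rewrite /= valK.
Qed.

Lemma Iinj w : injective_mod (Imod w).
Proof.
move=> B C i f hi hfree hf.
have [f1 f2] := hom_to_model_inv (@HacI w) hf.
have [J hJ] := row_freeP hfree.
pose z := f *m dc K (None : BI w).
pose psi := J *m z.
exists (mkcols (fun e : BI w => if e is Some c then rX C (val c) *m psi else rE C w *m psi)).
have vc (c : {c : qA Q | qs c == w}) : qs (val c) = w by apply/eqP; exact: (valP c).
split.
- apply: (hom_to_model (@HacI w)) => [[c|] v|[c|] a] /=.
  + by rewrite mulmxA EX -scalemxAl.
  + have hc : rE C w *m (rE C w *m psi) = rE C w *m psi by rewrite mulmxA rE_mul eqxx.
    exact: El hc.
  + by rewrite mulmxA rX_J2 mul0mx.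
  + case: insubP => [c Pa <-|nP] /=.
      by rewrite mulmxA XE vc eqxx scale1r.
    by rewrite mulmxA XE (negbTE nP) scale0r mul0mx.
- apply: colP' => e; rewrite -mulmxA mkcols_dc; case: e => [c|] /=.
  + rewrite mulmxA -hi.2 -!mulmxA /psi [i *m (J *m _)]mulmxA hJ mul1mx /z.
    by have := f2 None (val c); rewrite /= valK.
  + rewrite mulmxA -hi.1 -!mulmxA /psi [i *m (J *m _)]mulmxA hJ mul1mx /z.
    by have := f1 None w; rewrite eqxx scale1r.
Qed.

End Specific.


Section Card.
Variable T : finType.
Lemma card_le1_eq (P : {pred T}) a c : (#|P| <= 1)%N -> a \in P -> c \in P -> c = a.
Proof.
move=> h Pa Pc; apply/eqP; apply: contraTT h => ne; rewrite -ltnNge.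
by apply/card_gt1P; exists c, a.
Qed.
Lemma card_le2_eq (P : {pred T}) a b c : (#|P| <= 2)%N -> a \in P -> b \in P -> a != b ->
  c \in P -> c = a \/ c = b.
Proof.
move=> h Pa Pb ab Pc; case: (eqVneq c a) => [->|ca]; [by left|].
case: (eqVneq c b) => [->|cb]; [by right|].
have : (2 < #|P|)%N by apply/card_gt2P; exists a, b, c; split; split=> //; rewrite eq_sym.
by rewrite ltnNge h.
Qed.
Lemma card_ge2 (P : {pred T}) a b : a \in P -> b \in P -> a != b -> (1 < #|P|)%N.
Proof. by move=> Pa Pb ab; apply/card_gt1P; exists a, b. Qed.
Lemma card_ge1 (P : {pred T}) a : a \in P -> (0 < #|P|)%N.
Proof. by move=> Pa; apply/card_gt0P; exists a. Qed.
End Card.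

Section Quiv.
Variables (Q : quiver) (n : nat).
Hypothesis HQ : pre_admissible Q n.
Implicit Types (a b c : qA Q) (u v w : qV Q).

Lemma deg_le2 v : (indeg v <= 2)%N /\ (outdeg v <= 2)%N.
Proof.
case: HQ => [H _ _]; case: (H v) => [hin|[_ [-> ->]]] //.
have : all (fun p : nat * nat => (p.1 <= 2) && (p.2 <= 2))%N
  [:: (0,0); (0,1); (1,0); (1,1); (1,2); (2,1)]%N by [].
by move/allP/(_ _ hin) => /andP [].
Qed.

Lemma pa3 a : (outdeg (qs a) + indeg (qt a) <= 3)%N.
Proof. by case: HQ => _ _ h; apply: h. Qed.

Lemma pa2 a b : qs a = qs b -> qt a = qt b -> a = b.
Proof. by case: HQ => _ h _; apply: h. Qed.

Lemma in_eq1 v a c : (indeg v <= 1)%N -> qt a = v -> qt c = v -> c = a.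
Proof. by move=> h ha hc; apply: (card_le1_eq h); rewrite inE; apply/eqP. Qed.
Lemma out_eq1 v a c : (outdeg v <= 1)%N -> qs a = v -> qs c = v -> c = a.
Proof. by move=> h ha hc; apply: (card_le1_eq h); rewrite inE; apply/eqP. Qed.
Lemma in_eq2 v a b c : qt a = v -> qt b = v -> a != b -> qt c = v -> c = a \/ c = b.
Proof.
move=> ha hb ab hc; apply: (card_le2_eq (deg_le2 v).1) => //; rewrite inE; apply/eqP => //.
Qed.
Lemma out_eq2 v a b c : qs a = v -> qs b = v -> a != b -> qs c = v -> c = a \/ c = b.
Proof.
move=> ha hb ab hc; apply: (card_le2_eq (deg_le2 v).2) => //; rewrite inE; apply/eqP => //.
Qed.
Lemma in_ge2 a b : qt b = qt a -> a != b -> (1 < indeg (qt a))%N.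
Proof. by move=> h ab; apply: (card_ge2 (a:=a) (b:=b)) => //; rewrite inE ?h eqxx. Qed.
Lemma out_ge2 a b : qs b = qs a -> a != b -> (1 < outdeg (qs a))%N.
Proof. by move=> h ab; apply: (card_ge2 (a:=a) (b:=b)) => //; rewrite inE ?h eqxx. Qed.

Lemma src_out1 a b c : qt b = qt a -> a != b -> qt c = qt a -> (outdeg (qs c) <= 1)%N.
Proof.
move=> h ab hc; have := pa3 c; rewrite hc => h3.
have := in_ge2 h ab; move: h3; move: (outdeg _) (indeg _) => x y; lia.
Qed.
Lemma tgt_in1 a b c : qs b = qs a -> a != b -> qs c = qs a -> (indeg (qt c) <= 1)%N.
Proof.
move=> h ab hc; have := pa3 c; rewrite hc => h3.
have := out_ge2 h ab; move: h3; move: (outdeg _) (indeg _) => x y; lia.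
Qed.

End Quiv.


Section Classify.
Variables (Q : quiver) (n : nat) (K : fieldType).
Hypothesis HQ : pre_admissible Q n.
Variable M : rmod Q K.
Hypothesis Hi : indecomposable M.
Local Notation d := (rdim M).
Local Notation E := (rE M).
Local Notation X := (rX M).
Implicit Types (a b c : qA Q) (u v w : qV Q).

Lemma rv_scal (D : 'M[K]_1) (y : 'rV[K]_d) : D *m y = 0 -> y != 0 -> D = 0.
Proof.
rewrite [D]mx11_scalar mul_scalar_mx => /eqP; rewrite scaler_eq0 => /orP [/eqP ->|/eqP ->].
  by rewrite sc0'.
by rewrite eqxx.
Qed.

Lemma key2 (y z1 z2 : 'rV[K]_d) (T1 T2 : 'M[K]_d) : y != 0 -> y *m T1 = 0 -> y *m T2 = 0 ->
  (z1 = 0 \/ (z1 *m T1 = y /\ z1 *m T2 = 0)) ->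
  (z2 = 0 \/ (z2 *m T2 = y /\ z2 *m T1 = 0)) -> ~~ (y <= col_mx z1 z2)%MS.
Proof.
move=> y0 h1 h2 c1 c2; apply/negP => /submxP [D hD].
rewrite -[D]hsubmxK mul_row_col in hD.
have z2T1 : z2 *m T1 = 0 by case: c2 => [->|[]]; rewrite ?mul0mx.
have z1T2 : z1 *m T2 = 0 by case: c1 => [->|[]]; rewrite ?mul0mx.
have e1 : lsubmx D *m z1 = 0.
  case: c1 => [->|[t1 _]]; first by rewrite mulmx0.
  have := congr1 (mulmx^~ T1) hD; rewrite /= h1 mulmxDl -!mulmxA t1 z2T1 mulmx0 addr0.
  by move/esym/rv_scal => /(_ y0) ->; rewrite mul0mx.
have e2 : rsubmx D *m z2 = 0.
  case: c2 => [->|[t2 _]]; first by rewrite mulmx0.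
  have := congr1 (mulmx^~ T2) hD; rewrite /= h2 mulmxDl -!mulmxA t2 z1T2 mulmx0 add0r.
  by move/esym/rv_scal => /(_ y0) ->; rewrite mul0mx.
by move: y0; rewrite hD e1 e2 addr0 eqxx.
Qed.

Lemma EuXa a : E (qt a) *m X a = X a.
Proof. by rewrite EX eqxx scale1r. Qed.
Lemma XaEw a : X a *m E (qs a) = X a.
Proof. by rewrite XE eqxx scale1r. Qed.
Lemma EE v : E v *m E v = E v.
Proof. by rewrite rE_mul eqxx. Qed.

Lemma lam_ex b (x : 'rV[K]_d) (S : 'M[K]_d) (phi : 'cV[K]_d) :
  x *m E (qt b) = x -> x *m X b != 0 -> (kermx (X b) <= S)%MS -> S *m phi = 0 ->
  exists l : 'cV[K]_d, X b *m l = E (qt b) *m phi /\ x *m E (qs b) *m l = 0.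
Proof.
move=> hx nz hk hS.
have [l hl] : exists l : 'cV[K]_d,
    col_mx (X b) (x *m E (qs b)) *m l = col_mx (E (qt b) *m phi) 0.
  apply: solve_lin => m; rewrite -[m]hsubmxK !mul_row_col mulmx0 addr0 => h.
  have h2 : rsubmx m *m (x *m E (qs b)) = 0.
    have := congr1 (mulmx^~ (X b)) h; rewrite /= mul0mx mulmxDl -mulmxA rX_J2 mulmx0 add0r.
    rewrite -!mulmxA EX -scalemxAr.
    case: (eqVneq (qt b) (qs b)) => [e|ne].
      rewrite scale1r => /rv_scal /(_ nz) ->; by rewrite mul0mx.
    move=> _; rewrite -hx -mulmxA (rE_mul M) (negbTE ne) !mulmx0 //.
  move: h; rewrite h2 addr0 => h.
  have : (lsubmx m *m E (qt b) <= S)%MS.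
    by apply: submx_trans hk; apply/sub_kermxP; rewrite -mulmxA EuXa.
  by case/submxP => D hD; rewrite mulmxA hD -mulmxA hS mulmx0.
by exists l; move: hl; rewrite mul_col_mx => /eq_col_mx [h1 h2]; split=> //; rewrite -mulmxA.
Qed.

Lemma ker_sub (x : 'rV[K]_d) (A : 'M[K]_d) : x *m A = 0 -> (x <= kermx A)%MS.
Proof. by move=> h; apply/sub_kermxP. Qed.

Lemma sub_phi0 p m (z : 'M[K]_(m, d)) (S : 'M[K]_(p, d)) (phi : 'cV[K]_d) :
  (z <= S)%MS -> S *m phi = 0 -> z *m phi = 0.
Proof. by case/submxP => D ->; rewrite -mulmxA => ->; rewrite mulmx0. Qed.

Lemma col0 p (z : 'M[K]_(p, d)) (psi : 'cV[K]_d) : z *m psi = 0 -> (col_mx z (0 : 'M_(1, d))) *m psi = 0.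
Proof. by move=> h; rewrite mul_col_mx h mul0mx col_mx0. Qed.

Lemma classA : (forall a, X a = 0) -> exists v, iso M (Smod K v).
Proof.
move=> hX; have [d0 _] := Hi.
case: (pickP (fun v => E v != 0)) => [v Ev|h0]; last first.
  exfalso; have := rE_sum M; rewrite big1 => [|v _]; last by apply/eqP/negbFE; apply: h0.
  by move/esym/eqP; apply/negP; apply: one_neq0.
case: (pickP (fun i => row i (E v) != 0)) => [i Ei|h0]; last first.
  exfalso; move/negP: Ev; apply; apply/eqP/row_matrixP => i; rewrite row0.
  by apply/eqP/negbFE; apply: h0.
have xE : row i (E v) *m E v = row i (E v) by rewrite -row_mul EE.
have nz : ~~ (row i (E v) <= (0 : 'M[K]_d))%MS by rewrite submx0.
have [psi [_ hpsi]] := functional_ex nz.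
by exists v; apply: recS xE hX hpsi.
Qed.

Lemma classB1 a b (x : 'rV[K]_d) : qt b = qt a -> b != a -> x *m E (qt a) = x -> x *m X a != 0 ->
  iso M (Pmod K (qt a)) \/ iso M (Imod K (qs a)).
Proof.
move=> hb ba hx nz.
have ab : a != b by rewrite eq_sym.
have inab c : qt c = qt a -> c = a \/ c = b by move=> hc; apply: (in_eq2 HQ (a:=a) (b:=b)).
set u := qt a in hb hx inab *.
set S := (kermx (X a) + kermx (X b))%MS.
case: (boolP (x <= S)%MS) => hxS.
- right; case/sub_addsmxP: hxS => [[u1 u2] /= ex].
  pose x' := u2 *m kermx (X b) *m E u.
  have hx'a : x' *m X a = x *m X a.
    rewrite /x' -mulmxA EuXa ex mulmxDl -(mulmxA u1) mulmx_ker mulmx0 add0r //.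
  have hx'b : x' *m X b = 0.
    by rewrite /x' -mulmxA -hb EuXa -mulmxA mulmx_ker mulmx0.
  have hx'E : x' *m E u = x' by rewrite /x' -mulmxA EE.
  set y := x *m X a in nz hx'a.
  have nS : ~~ (y <= col_mx (x' *m E (qs a)) (0 : 'M[K]_(1, d)))%MS.
    apply: (key2 (T1 := X a) (T2 := 0)) => //; rewrite ?mulmx0 //.
    - by rewrite /y XX.
    - case: (eqVneq u (qs a)) => [e|ne]; [right|left].
        by rewrite -e hx'E hx'a.
      by rewrite -hx'E -mulmxA rE_mul (negbTE ne) mulmx0.
    - by left.
  have [psi [hS hpsi]] := functional_ex nS.
  move: hS; rewrite mul_col_mx -col_mx0 => /eq_col_mx [hS _].
  have out1 c : qs c = qs a -> c = a.
    by move=> hc; apply: (out_eq1 (src_out1 HQ hb ab (erefl _)) (erefl _) hc).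
  apply: (recI (y := y) (psi := psi) (xs := fun _ => x')) => //.
  - by rewrite /y -mulmxA XaEw.
  - by move=> dd; rewrite /y XX.
  - by move=> c /out1 ->.
  - move=> c dd /out1 ->; rewrite -hx'E -mulmxA EX.
    case: (eqVneq (qt dd) u) => [e|ne]; last first.
      rewrite (_ : (dd == a) = false) ?scale0r ?mulmx0 //.
      by apply: contraNF ne => /eqP ->.
    rewrite scale1r; case: (inab _ e) => ->; first by rewrite eqxx scale1r hx'a.
    by rewrite hx'b (negbTE ba) scale0r.
- left.
  have [phi [hS hphi]] := functional_ex hxS.
  have nzb : x *m X b != 0.
    apply: contra hxS => /eqP h; apply: submx_trans (ker_sub h) _; exact: addsmxSr.
  have [la [la1 la2]] := lam_ex (b := a) hx nz (addsmxSl _ _) hS.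
  have hxb : x *m E (qt b) = x by rewrite hb.
  have [lb [lb1 lb2]] := lam_ex (b := b) hxb nzb (addsmxSr _ _) hS.
  rewrite hb in lb1.
  have out1 c b' : qt b' = u -> qs c = qs b' -> c = b'.
    move=> hb' hc; exact: (out_eq1 (src_out1 HQ hb ab hb') (erefl _) hc).
  apply: (recP (x := x) (phi := phi) (lam := fun c => if c == a then la else lb)) => //.
  - move=> b' /inab [->|->]; first by rewrite eqxx.
    by rewrite (negbTE ba).
  - move=> c; apply: (sub_phi0 _ hS); apply: submx_trans (addsmxSl _ (kermx (X b))).
    by apply/sub_kermxP; rewrite -mulmxA EuXa rX_J2.
  - move=> b' c hb' cb; rewrite XE.
    case: (eqVneq (qs c) (qs b')) => [e|ne]; last by rewrite scale0r !mul0mx.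
    by move: cb; rewrite (out1 _ _ hb' e) eqxx.
  - move=> b' /inab [->|->]; first by rewrite eqxx.
    by rewrite (negbTE ba).
Qed.

Lemma classB2 a (x : 'rV[K]_d) : (forall c, qt c = qt a -> c = a) -> x *m E (qt a) = x ->
  x *m X a != 0 -> iso M (Pmod K (qt a)) \/ iso M (Imod K (qs a)).
Proof.
move=> ina hx nz.
set u := qt a in ina hx *; set w := qs a.
case: (classic (exists c, [/\ c != a, qs c = w & exists m m' : 'rV[K]_d,
          m *m X a = m' *m X c /\ m *m X a != 0])).
- move=> [c [ca hc [m [m' [e mnz]]]]]; right.
  have ac : a != c by rewrite eq_sym.
  have uu : qt c != u by apply: contra ca => /eqP /ina ->.
  have inc1 := tgt_in1 HQ hc ac hc.
  set y := m *m X a in e mnz.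
  pose xa := m *m E u; pose xc := m' *m E (qt c).
  have xaa : xa *m X a = y by rewrite /xa -mulmxA EuXa.
  have xcc : xc *m X c = y by rewrite /xc -mulmxA EuXa e.
  have xaE : xa *m E u = xa by rewrite /xa -mulmxA EE.
  have xcE : xc *m E (qt c) = xc by rewrite /xc -mulmxA EE.
  have xaX dd : xa *m X dd = (dd == a)%:R *: y.
    rewrite -xaE -mulmxA EX; case: (eqVneq (qt dd) u) => [/ina ->|ne].
      by rewrite eqxx !scale1r xaa.
    rewrite (_ : (dd == a) = false) ?scale0r ?mulmx0 //.
    by apply: contraNF ne => /eqP ->.
  have xcX dd : xc *m X dd = (dd == c)%:R *: y.
    rewrite -xcE -mulmxA EX; case: (eqVneq (qt dd) (qt c)) => [hd|ne].
      by rewrite (in_eq1 inc1 (erefl _) hd) eqxx !scale1r xcc.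
    rewrite (_ : (dd == c) = false) ?scale0r ?mulmx0 //.
    by apply: contraNF ne => /eqP ->.
  have nS : ~~ (y <= col_mx (xa *m E w) (xc *m E w))%MS.
    apply: (key2 (T1 := X a) (T2 := X c)) => //; rewrite ?/y ?XX //.
    - case: (eqVneq u w) => [ew|ne]; [right|left].
        by rewrite -ew xaE xaX eqxx scale1r xaX (negbTE ca) scale0r.
      by rewrite -xaE -mulmxA rE_mul (negbTE ne) mulmx0.
    - case: (eqVneq (qt c) w) => [ew|ne]; [right|left].
        by rewrite -ew xcE xcX eqxx scale1r xcX (negbTE ac) scale0r.
      by rewrite -xcE -mulmxA rE_mul (negbTE ne) mulmx0.
  have [psi [hS hpsi]] := functional_ex nS.
  move: hS; rewrite mul_col_mx -col_mx0 => /eq_col_mx [hSa hSc].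
  have outw c0 : qs c0 = w -> c0 = a \/ c0 = c.
    by move=> h0; apply: (out_eq2 HQ (a:=a) (b:=c)).
  apply: (recI (y := y) (psi := psi) (xs := fun dd => if dd == a then xa else xc)) => //.
  - by rewrite /y -mulmxA XaEw.
  - by move=> dd; rewrite /y XX.
  - move=> c0 /outw [->|->]; first by rewrite eqxx.
    by rewrite (negbTE ca).
  - move=> c0 dd /outw [->|->]; first by rewrite eqxx xaX.
    by rewrite (negbTE ca) xcX.
  - move=> c0 /outw [->|->]; first by rewrite eqxx.
    by rewrite (negbTE ca).
- move=> H; left.
  pose Z := if [pick c | (qs c == w) && (c != a)] is Some c then X c else 0.
  set y := x *m X a in nz.
  have nS : ~~ (y <= col_mx x Z)%MS.
    apply/negP => /submxP [D hD]; rewrite -[D]hsubmxK mul_row_col in hD.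
    have hZ : Z *m X a = 0 by rewrite /Z; case: pickP => [c _|_]; rewrite ?rX_J2 ?mul0mx.
    have D1 : lsubmx D = 0.
      have := congr1 (mulmx^~ (X a)) hD; rewrite /= /y XX mulmxDl -!mulmxA hZ mulmx0 addr0.
      by move/esym/rv_scal; apply.
    rewrite D1 mul0mx add0r in hD.
    move: hD; rewrite /Z; case: pickP => [c /andP [/eqP hc ca]|_] hD; last first.
      by move: nz; rewrite hD mulmx0 eqxx.
    apply: H; exists c; split=> //; exists x, (rsubmx D); split=> //.
  have [psi [hS hpsi]] := functional_ex nS.
  move: hS; rewrite mul_col_mx -col_mx0 => /eq_col_mx [hSx hSZ].
  apply: (recP (x := x) (phi := X a *m psi) (lam := fun _ => psi)) => //.
  - by rewrite mulmxA.
  - move=> b /ina ->; rewrite (Er _ hx) -scalemxAl hSx scaler0 //.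
  - by move=> c; rewrite mulmxA -(mulmxA _ _ (X a)) EuXa rX_J2 mul0mx.
  - move=> b c /ina -> ca; rewrite XE.
    case: (eqVneq (qs c) (qs a)) => [hc|ne]; last by rewrite scale0r !mul0mx.
    rewrite scale1r; move: hSZ; rewrite /Z; case: pickP => [c' /andP [/eqP hc' c'a]|hn].
      have ac' : a != c' by rewrite eq_sym.
      have [e1|->] := out_eq2 HQ (a:=a) (b:=c') (c:=c) (erefl _) hc' ac' hc.
        by move: ca; rewrite e1 eqxx.
      done.
    by move: (hn c); rewrite hc eqxx ca.
  - by move=> b /ina ->; rewrite mulmxA EuXa.
Qed.

Lemma classify : (exists v, iso M (Smod K v)) \/ (exists u, iso M (Pmod K u)) \/
  (exists w, iso M (Imod K w)).
Proof.
case: (pickP (fun a => X a != 0)) => [a Xa|h0]; last first.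
  by left; apply: classA => a; apply/eqP/negbFE; exact: h0.
right.
case: (pickP (fun i => row i (X a) != 0)) => [i Xi|h1]; last first.
  exfalso; move/negP: Xa; apply; apply/eqP/row_matrixP => i; rewrite row0.
  by apply/eqP/negbFE; exact: h1.
pose x := row i (E (qt a)).
have hx : x *m E (qt a) = x by rewrite -row_mul EE.
have nz : x *m X a != 0 by rewrite -row_mul EuXa.
case: (pickP (fun b => (qt b == qt a) && (b != a))) => [b /andP [/eqP hb ba]|h2].
  by case: (classB1 hb ba hx nz) => h; [left|right]; eexists; exact h.
have ina c : qt c = qt a -> c = a.
  move=> hc; apply/eqP; apply/negPn/negP => ne.
  by move: (h2 c); rewrite hc eqxx ne.
by case: (classB2 ina hx nz) => h; [left|right]; eexists; exact h.
Qed.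

End Classify.


Section Strings.
Variables (Q : quiver) (n : nat).
Hypothesis HQ : pre_admissible Q n.
Implicit Types (a b c : qA Q).

Lemma partA : string_algebra (@J2 Q).
Proof.
split.
- by move=> p q r _; rewrite /J2 !size_cat => h; lia.
- exact: deg_le2 HQ.
- by move=> a; rewrite eq_card0 // => b; by rewrite !inE /J2 /= andbF.
- by move=> a; rewrite eq_card0 // => b; by rewrite !inE /J2 /= andbF.
Qed.

Lemma no_two_in_out b a c : qt a = qt b -> a != b -> qs c = qs b -> c != b -> False.
Proof.
move=> ha ab hc cb.
have ba : b != a by rewrite eq_sym.
have bc : b != c by rewrite eq_sym.
have h1 := in_ge2 ha ba.
have h2 := out_ge2 hc bc.
have h3 := pa3 HQ b.
move: h1 h2 h3; move: (indeg _) (outdeg _) => x y; lia.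
Qed.

Lemma partB1 (w : seq (letter Q)) : is_string (@J2 Q) w -> (size w <= 2)%N.
Proof.
case=> _; case: w => [|x1 [|x2 [|x3 t]]] //= Hs1 Hs2 H.
have [h01 h01'] := H 0%N 1%N isT.
have [h11 h11'] := H 1%N 1%N isT.
move: h01 h01' h11 h11' Hs1 Hs2 => /=; clear H.
rewrite take0 /J2 /=.
case: x1 x2 x3 => [a p1] [b p2] [c p3] /=.
case: p1; case: p2; case: p3 => /= h1 h2 h3 h4 /and3P [/eqP e1 /eqP e2 _] /and3P [n1 n2 _];
  try (by move: (h1 isT)); try (by move: (h2 isT)); try (by move: (h3 isT));
  try (by move: (h4 isT)).
- have ab : a != b by apply: contra n1 => /eqP ->.
  have cb : c != b by apply: contra n2 => /eqP ->.
  by case: (no_two_in_out e1 ab (esym e2) cb).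
- have ab : a != b by apply: contra n1 => /eqP ->.
  have cb : c != b by apply: contra n2 => /eqP ->.
  by case: (no_two_in_out (esym e2) cb e1 ab).
Qed.

Lemma partB2 (w : seq (letter Q)) : ~ is_band (@J2 Q) w.
Proof.
case=> hs _ hq _.
have h2 := hq 2%N isT.
have := partB1 h2; rewrite /= cats0 size_cat => hsz.
move: hs hq h2 hsz; case: w => [|x [|y t]].
- by case=> /(_ erefl).
- move=> _ _ [_ _ _ H2] _.
  have [h1 h2] := H2 0%N 1%N isT; move: h1 h2 => /=; rewrite /J2 /=.
  by case: x {H2} => a [] /=; [move/(_ isT) | move=> _ /(_ isT)].
- by move=> _ _ _ /=; lia.
Qed.

End Strings.

Local Close Scope ring_scope.
Unset Implicit Arguments.

Theorem theorem2p10 (n : nat) (Q : quiver) (K : fieldType) :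
  (2 <= n)%N -> connected_quiver Q -> pre_admissible Q n ->
  [/\ string_algebra (@J2 Q),
      (forall w : seq (letter Q), is_string (@J2 Q) w -> (size w <= 2)%N)
        /\ (forall w : seq (letter Q), ~ is_band (@J2 Q) w),
      rep_finite Q K &
      forall M : rmod Q K, indecomposable M -> ~ simple_mod M ->
        projective_mod M \/ injective_mod M].
Proof.
move=> _ _ HQ; split.
- exact: partA HQ.
- by split; [exact: partB1 HQ | exact: partB2 HQ].
- pose T := (qV Q + (qV Q + qV Q))%type.
  exists #|{: T}|, (fun i => match enum_val i with
                    | inl v => Smod K v | inr (inl u) => Pmod K u
                    | inr (inr w) => Imod K w end).
  move=> M Hi; case: (classify HQ Hi) => [[v h]|[[u h]|[w h]]].
  + by exists (enum_rank (inl v : T)); rewrite enum_rankK.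
  + by exists (enum_rank (inr (inl u) : T)); rewrite enum_rankK.
  + by exists (enum_rank (inr (inr w) : T)); rewrite enum_rankK.
- move=> M Hi ns; case: (classify HQ Hi) => [[v h]|[[u h]|[w h]]].
  + by exfalso; apply: ns; apply: dim1_simple; rewrite (iso_dim h) /= card_unit.
  + by left; apply: (iso_proj h); apply: Pproj.
  + by right; apply: (iso_inj h); apply: Iinj.
Qed.
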